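(* Let $\varphi:\mathbb{R}^n\to(-\infty,\infty]$ be prox-regular at $\bar x$ for $0\in\partial\varphi(\bar x)$, and let $\bar x$ be a strong local minimizer of $\varphi$ with modulus $\sigma>0$. Then $$\langle z,w\rangle\ge\sigma\|w\|^2\quad\text{for all } w\in\mathbb{R}^n,\ z\in\breve\partial^2\varphi(\bar x,0)(w),$$ and consequently $\langle z,w\rangle>0$ for all $w\in\mathbb{R}^n\setminus\{0\}$ and $z\in\breve\partial^2\varphi(\bar x,0)(w)$.
   Context: $\bar x\in\operatorname{dom}\varphi$ is a strong local minimizer with modulus $\sigma>0$ if $\varphi(x)\ge\varphi(\bar x)+\frac\sigma2\|x-\bar x\|^2$ for all $x$ in a neighborhood of $\bar x$. Standard regular/limiting subdifferentials and coderivatives; $\breve\partial^2\varphi(\bar x,\bar v)(u):=\widehat D^*(\partial\varphi)(\bar x,\bar v)(u)$ where $\widehat D^*F(\bar x,\bar y)(u):=\{v:(v,-u)\in\widehat N_{\operatorname{gph}F}(\bar x,\bar y)\}$. Prox-regularity at $\bar x$ for $\bar v$: $\varphi$ finite and locally l.s.c. around $\bar x$ and there exist $\varepsilon>0,r\ge0$ with $\varphi(x)\ge\varphi(u)+\langle v,x-u\rangle-\frac r2\|x-u\|^2$ for all $\|x-\bar x\|<\varepsilon$, $v\in\partial\varphi(u)$, $\|v-\bar v\|<\varepsilon$, $\|u-\bar x\|<\varepsilon$, $\varphi(u)<\varphi(\bar x)+\varepsilon$. *)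

(* Defs.v *)
From HB Require Import structures.
From mathcomp Require Import all_boot all_order all_algebra.
From mathcomp Require Import all_classical all_reals all_analysis.
Set Implicit Arguments. Unset Strict Implicit. Unset Printing Implicit Defensive.
Import Order.TTheory GRing.Theory Num.Theory.
Import numFieldNormedType.Exports.
Local Open Scope classical_set_scope.
Local Open Scope ring_scope.

Section Defs.
Variables (R : realType) (n : nat).
Implicit Types (x u v w y : 'rV[R]_n) (phi : 'rV[R]_n -> \bar R).

Definition dotp (u v : 'rV[R]_n) : R := \sum_(i < n) u ord0 i * v ord0 i.
Definition enorm (u : 'rV[R]_n) : R := Num.sqrt (dotp u u).

Definition lsc_at phi x : Prop :=
  forall a : R, (a%:E < phi x)%E -> \forall z \near x, (a%:E < phi z)%E.

Definition locally_lsc phi (xb : 'rV[R]_n) : Prop :=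
  exists2 d : R, 0 < d & forall x, enorm (x - xb) < d -> lsc_at phi x.

(* regular (Frechet) subdifferential:
   liminf_{u -> x} (phi u - phi x - <v,u-x>)/|u-x| >= 0, unfolded *)
Definition reg_subdiff phi x : set 'rV[R]_n :=
  [set v | phi x \is a fin_num /\
     forall eps : R, 0 < eps -> exists2 d : R, 0 < d &
       forall u, enorm (u - x) < d ->
         (phi x + (dotp v (u - x) - eps * enorm (u - x))%:E <= phi u)%E].

Definition lim_subdiff phi x : set 'rV[R]_n :=
  [set v | exists (xk vk : nat -> 'rV[R]_n),
     [/\ xk k @[k --> \oo] --> x,
         phi (xk k) @[k --> \oo] --> phi x,
         (forall k, reg_subdiff phi (xk k) (vk k)) &
         vk k @[k --> \oo] --> v]].

(* regular normal cone to the graph of a set-valued map F at (xb, yb):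
   (a, b) such that limsup_{(x,y) -> (xb,yb), (x,y) in gph F}
   (<a, x - xb> + <b, y - yb>) / |(x,y) - (xb,yb)| <= 0,
   with the Euclidean norm on R^n x R^n *)
Definition reg_normal_graph (F : 'rV[R]_n -> set 'rV[R]_n) (xb yb a b : 'rV[R]_n)
  : Prop :=
  F xb yb /\
  forall eps : R, 0 < eps -> exists2 d : R, 0 < d &
    forall x y, F x y ->
      Num.sqrt (dotp (x - xb) (x - xb) + dotp (y - yb) (y - yb)) < d ->
      dotp a (x - xb) + dotp b (y - yb) <=
        eps * Num.sqrt (dotp (x - xb) (x - xb) + dotp (y - yb) (y - yb)).

Definition reg_coderiv (F : 'rV[R]_n -> set 'rV[R]_n) (xb yb u : 'rV[R]_n)
  : set 'rV[R]_n := [set v | reg_normal_graph F xb yb v (- u)].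

Definition breve_subdiff2 phi (xb vb u : 'rV[R]_n) : set 'rV[R]_n :=
  reg_coderiv (lim_subdiff phi) xb vb u.

Definition prox_regular phi (xb vb : 'rV[R]_n) : Prop :=
  phi xb \is a fin_num /\ locally_lsc phi xb /\
  exists eps : R, exists r : R, [/\ 0 < eps, 0 <= r &
    forall x u v, enorm (x - xb) < eps -> lim_subdiff phi u v ->
      enorm (v - vb) < eps -> enorm (u - xb) < eps ->
      (phi u < phi xb + eps%:E)%E ->
      (phi u + (dotp v (x - u) - r / 2 * enorm (x - u) ^+ 2)%:E <= phi x)%E].

Definition strong_local_min phi (xb : 'rV[R]_n) (sigma : R) : Prop :=
  phi xb \is a fin_num /\
  exists2 d : R, 0 < d & forall x, enorm (x - xb) < d ->
    (phi xb + (sigma / 2 * enorm (x - xb) ^+ 2)%:E <= phi x)%E.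

End Defs.

(* Main.v *)
Require Import Defs.
From mathcomp Require Import all_boot all_order all_algebra.
From mathcomp Require Import all_classical all_reals all_analysis.
From mathcomp Require Import ring lra.
Import Order.TTheory GRing.Theory Num.Theory.
Import numFieldNormedType.Exports.
Local Open Scope classical_set_scope.
Local Open Scope ring_scope.
Set Implicit Arguments. Unset Strict Implicit.


Lemma lsc_min (R : realType) (T : topologicalType) (K : set T) (f : T -> \bar R) :
  compact K -> K !=set0 -> (forall y, f y != -oo%E) ->
  (forall x, K x -> forall a : R, (a%:E < f x)%E -> \forall z \near x, (a%:E < f z)%E) ->
  exists2 p, K p & forall q, K q -> (f p <= f q)%E.
Proof.
move=> cK [k0 Kk0] fN lsc.
apply: contrapT => Hno.
have Hlt : forall p, K p -> exists2 q, K q & (f q < f p)%E.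
  move=> p Kp; apply: contrapT => Hp; apply: Hno; exists p => // q Kq.
  by rewrite leNgt; apply/negP => Hq; apply: Hp; exists q.
pose D := fun q => [set y | K y /\ (f y < f q)%E].
have FF : Filter (filter_from K D).
  apply: filter_from_filter; first by exists k0.
  move=> i j Ki Kj; have [fij|fji] := leP (f i) (f j).
    exists i => // y [Ky fy]; split; split => //; exact: lt_le_trans fij.
  exists j => // y [Ky fy]; split; split => //; exact: lt_trans fji.
have PF : ProperFilter (filter_from K D).
  apply: filter_from_proper => i Ki; have [q Kq fq] := Hlt i Ki; by exists q.
have [x [Kx clx]] := cK _ PF (ex_intro2 _ _ k0 Kk0 (fun y (h : D k0 y) => h.1)).
have [q Kq fqx] := Hlt x Kx.
have fqfin : f q \is a fin_num.
  by rewrite fin_numE fN /= lt_eqF // (lt_le_trans fqx) ?leey.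
have := lsc x Kx (fine (f q)); rewrite fineK // => /(_ fqx) Hn.
have [y [[_ fyq] /= qy]] := clx _ _ (@in_filter_from _ _ K D q Kq) Hn.
by move: (lt_trans fyq qy); rewrite ltxx.
Qed.


Section Dot.
Variables (R : realType) (n : nat).
Implicit Types (u v w : 'rV[R]_n).

Lemma dotpC u v : dotp u v = dotp v u.
Proof. by apply: eq_bigr => i _; rewrite mulrC. Qed.
Lemma dotpDl u v w : dotp (u + v) w = dotp u w + dotp v w.
Proof. by rewrite /dotp -big_split; apply: eq_bigr => i _; rewrite mxE mulrDl. Qed.
Lemma dotpDr u v w : dotp w (u + v) = dotp w u + dotp w v.
Proof. by rewrite dotpC dotpDl !(dotpC w). Qed.
Lemma dotpZl a u v : dotp (a *: u) v = a * dotp u v.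
Proof. by rewrite /dotp mulr_sumr; apply: eq_bigr => i _; rewrite mxE mulrA. Qed.
Lemma dotpZr a u v : dotp v (a *: u) = a * dotp v u.
Proof. by rewrite dotpC dotpZl dotpC. Qed.
Lemma dotpNl u v : dotp (- u) v = - dotp u v.
Proof. by rewrite -scaleN1r dotpZl mulN1r. Qed.
Lemma dotpNr u v : dotp v (- u) = - dotp v u.
Proof. by rewrite dotpC dotpNl dotpC. Qed.
Lemma dotpBl u v w : dotp (u - v) w = dotp u w - dotp v w.
Proof. by rewrite dotpDl dotpNl. Qed.
Lemma dotpBr u v w : dotp w (u - v) = dotp w u - dotp w v.
Proof. by rewrite dotpDr dotpNr. Qed.
Lemma dotp0l u : dotp 0 u = 0.
Proof. by rewrite /dotp big1 // => i _; rewrite mxE mul0r. Qed.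
Lemma dotp0r u : dotp u 0 = 0.
Proof. by rewrite dotpC dotp0l. Qed.
Lemma dotp_ge0 u : 0 <= dotp u u.
Proof. by apply: sumr_ge0 => i _; rewrite -expr2 sqr_ge0. Qed.
Lemma enorm_sq u : enorm u ^+ 2 = dotp u u.
Proof. by rewrite /enorm sqr_sqrtr // dotp_ge0. Qed.
Lemma enorm_ge0 u : 0 <= enorm u.
Proof. exact: sqrtr_ge0. Qed.

Lemma coord_le_norm u i : `|u ord0 i| <= `|u|.
Proof.
change (`|u ord0 i| <= mx_norm u); rewrite mx_normrE; apply/bigmax_geP; right => /=.
by exists (ord0, i).
Qed.

Lemma dotp_le_norm u v : `|dotp u v| <= n%:R * (`|u| * `|v|).
Proof.
rewrite /dotp; apply: le_trans (ler_norm_sum _ _ _) _.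
have -> : n%:R * (`|u| * `|v|) = \sum_(i < n) (`|u| * `|v|) by rewrite sumr_const card_ord mulr_natl.
apply: ler_sum => i _.
by rewrite normrM ler_pM ?coord_le_norm.
Qed.

Lemma norm_le_dotp u : `|u| ^+ 2 <= dotp u u.
Proof.
rewrite -[dotp u u]sqr_sqrtr ?dotp_ge0 // ler_pXn2r ?nnegrE ?sqrtr_ge0 //.
change (mx_norm u <= Num.sqrt (dotp u u)); rewrite mx_normrE; apply: bigmax_le; first exact: sqrtr_ge0.
case=> i j _ /=; rewrite (ord1 i).
rewrite -[`|u ord0 j|]sqrtr_sqr ler_wsqrtr //.
rewrite /dotp (bigD1 j) //= -expr2 lerDl.
by apply: sumr_ge0 => k _; rewrite -expr2 sqr_ge0.
Qed.

Lemma dotp_le_n u : dotp u u <= n%:R * `|u| ^+ 2.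
Proof. by rewrite expr2; apply: le_trans (dotp_le_norm u u); apply: ler_norm. Qed.

Lemma sqD u v :
  dotp (u + v) (u + v) = dotp u u + 2 * dotp u v + dotp v v.
Proof. rewrite dotpDl !dotpDr (dotpC v u); ring. Qed.

End Dot.


Lemma chain (R : realType) (E V : R -> R) (phi0 a c eps T : R) :
  0 < eps -> 0 < T ->
  (forall t, 0 < t -> phi0 + a / 2 * t ^+ 2 <= E t) ->
  (forall t s, 0 < t -> 0 < s -> E s <= E t + V t * (s - t) + c / 2 * (s - t) ^+ 2) ->
  (forall s, 0 < s -> E s <= phi0 + c / 2 * s ^+ 2) ->
  exists2 t, 0 < t /\ t <= T & (a - eps) * t <= V t.
Proof.
move=> he hT Hlb Hstep Hub.
apply: contrapT => Hno.
have H : forall t, 0 < t -> t <= T -> V t < (a - eps) * t.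
  move=> t t0 tT; rewrite ltNge; apply/negP => Ht; apply: Hno; by exists t.
pose M := Num.Def.archi_bound (`|c - a| / eps).
have HM : `|c - a| / eps < M%:R by apply: archi_boundP; rewrite divr_ge0 // ltW.
pose N := M.+2.
have N0 : 0 < N%:R :> R by rewrite ltr0n.
pose D := T / N%:R.
have D0 : 0 < D by rewrite divr_gt0.
have kD0 : forall k : nat, 0 < k.+1%:R * D by move=> k; rewrite mulr_gt0 ?ltr0n.
have kDT : forall k : nat, (k.+1 <= N)%N -> k.+1%:R * D <= T.
  move=> k hk; rewrite /D mulrA ler_pdivrMr // mulrC ler_pM2l //.
  by rewrite ler_nat.
have Hc : forall k : nat, (k < N)%N -> E (k.+1%:R * D) <=
   phi0 + (a - eps) * D ^+ 2 * (k.+1%:R * k%:R / 2) + c / 2 * D ^+ 2 * k.+1%:R.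
  elim=> [_|k IH hk].
    rewrite mul1r mulr0 mul0r mulr0 addr0 mulr1; exact: Hub.
  have IH' := IH (ltnW hk).
  have hs := Hstep _ (k.+2%:R * D) (kD0 k) (kD0 k.+1).
  have hv := H _ (kD0 k) (kDT k (ltnW hk)).
  move: IH' hs hv; rewrite -[k.+2]addn1 -[k.+1]addn1 !natrD.
  set K := k%:R; move=> IH' hs hv.
  have e1 : (K + 1 + 1) * D - (K + 1) * D = D by ring.
  rewrite e1 in hs.
  have HK : 0 <= K by rewrite ler0n.
  nra.
have := Hc M.+1 (ltnSn _); rewrite -/N.
have NDT : N%:R * D = T by rewrite /D mulrC divfK // gt_eqF.
rewrite NDT => /(le_trans (Hlb _ hT)); rewrite -NDT.
have hM : `|c - a| < M%:R * eps by rewrite -ltr_pdivrMr.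
have hca : c - a <= `|c - a| by apply: ler_norm.
have hD2 : 0 < D ^+ 2 by rewrite exprn_gt0.
move: hM hca N0; rewrite /N -[M.+2]addn1 -[M.+1]addn1 !natrD.
set m := M%:R; move=> hM hca N0 h.
have hm : 0 <= m by rewrite ler0n.
have hDN : 0 < D ^+ 2 * (m + 1 + 1) by rewrite mulr_gt0.
have hpos : 0 < eps * (m + 1) - (c - a) by nra.
have : 0 < D ^+ 2 * (m + 1 + 1) * (eps * (m + 1) - (c - a)) by rewrite mulr_gt0.
nra.
Qed.


Section Prox.
Variables (R : realType) (n : nat) (phi : 'rV[R]_n -> \bar R) (xb : 'rV[R]_n).
Variables (phi0 sigma lam rho : R).
Hypotheses (hphi0 : phi xb = phi0%:E) (hN : forall x, phi x != -oo%E).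
Hypotheses (hs : 0 < sigma) (hl : 0 < lam) (hr : 0 < rho).
Hypothesis hmin : forall q, `|q - xb| <= rho ->
  ((phi0 + sigma / 2 * dotp (q - xb) (q - xb))%:E <= phi q)%E.
Hypothesis hlsc : forall q, `|q - xb| <= rho -> lsc_at phi q.

Definition cost (x q : 'rV[R]_n) := dotp (x - q) (x - q) / (2 * lam).

Lemma cost_lb x q z : cost x q - n%:R * (`|x - q| * `|q - z|) / lam <= cost x z.
Proof.
rewrite /cost.
have -> : x - z = (x - q) + (q - z) by rewrite addrA subrK.
rewrite (sqD (x - q) (q - z)).
have hB := dotp_le_norm (x - q) (q - z).
have hC := dotp_ge0 (q - z).
move: hB hC; set A := dotp (x - q) (x - q); set B := dotp (x - q) (q - z).
set C := dotp (q - z) (q - z); set P := n%:R * _ => hB hC.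
have hB' : - P <= B by move: hB; rewrite ler_norml => /andP[].
have -> : A / (2 * lam) - P / lam = (A - 2 * P) / (2 * lam).
  by field; rewrite gt_eqF.
rewrite ler_pM2r ?invr_gt0 ?mulr_gt0 //; lra.
Qed.

Lemma lsc_cost x q : `|q - xb| <= rho -> forall a : R,
  (a%:E < phi q + (cost x q)%:E)%E ->
  \forall z \near q, (a%:E < phi z + (cost x z)%:E)%E.
Proof.
move=> hq a ha.
have [b [eta [he hb ab]]] : exists b eta, [/\ 0 < eta, (b%:E < phi q)%E &
    a = b + cost x q - eta].
  move: ha; case E: (phi q) => [r| |].
  - rewrite -EFinD lte_fin => ha.
    exists (r - (r + cost x q - a) / 2), ((r + cost x q - a) / 2).
    split; [by rewrite divr_gt0 // subr_gt0 | rewrite lte_fin; lra | by field].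
  - move=> _; exists (a - cost x q + 1), 1; split; [exact: ltr01 | by rewrite ltry | ring].
  - by move: (hN q); rewrite E.
pose d := eta * lam / (n%:R * `|x - q| + 1).
have hd1 : 0 < n%:R * `|x - q| + 1 by rewrite ltr_wpDl // mulr_ge0.
have hd : 0 < d by rewrite /d divr_gt0 // mulr_gt0.
have Hb := hlsc hq hb.
have Hd := nbhsx_ballx q d hd.
apply: filterS2 Hb Hd => z bz; rewrite -ball_normE /= => dz.
have hc : cost x q - eta < cost x z.
  apply: lt_le_trans (cost_lb x q z).
  rewrite ltrD2l ltrN2 ltr_pdivrMr //.
  apply: le_lt_trans (_ : (n%:R * `|x - q| + 1) * `|q - z| < _).
    by rewrite mulrA mulrDl mul1r lerDl normr_ge0.
  by rewrite mulrC -ltr_pdivlMr // mulrC.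
move: bz; case E: (phi z) => [s| |] //.
- rewrite !lte_fin ab => bs; lra.
- by move=> _; rewrite addye // ltry.
Qed.

Lemma prox_ex x : exists2 p, `|p - xb| <= rho &
  forall q, `|q - xb| <= rho -> (phi p + (cost x p)%:E <= phi q + (cost x q)%:E)%E.
Proof.
pose K := closed_ball xb rho.
have KE : forall q, K q <-> `|q - xb| <= rho.
  by move=> q; rewrite /K closed_ballE //= distrC.
have cK : compact K.
  apply: bounded_closed_compact; last by rewrite /K closed_ballE //; exact: closed_closed_ball_.
  suff Hb : [bounded y | y in K] by exact: Hb.
  rewrite /bounded_near; near=> M => y /KE hy /=.
  have : `|y| <= `|xb| + rho.
    have -> : y = xb + (y - xb) by rewrite addrC subrK.
    by apply: le_trans (ler_normD _ _) _; rewrite lerD2l.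
  move/le_trans; apply; near: M; apply: nbhs_pinfty_ge; exact: num_real.
have H1 : K !=set0 by exists xb; apply/KE; rewrite subrr normr0 ltW.
have H2 : forall y, phi y + (cost x y)%:E != -oo%E.
  by move=> y; case E: (phi y) (hN y) => [r| |].
have H3 : forall q, K q -> forall a : R, (a%:E < phi q + (cost x q)%:E)%E ->
  \forall z \near q, (a%:E < phi z + (cost x z)%:E)%E.
  by move=> q /KE; exact: lsc_cost.
have [p Kp Hp] := lsc_min cK H1 H2 H3.
by exists p; [apply/KE | move=> q /KE; exact: Hp].
Unshelve. all: by end_near.
Qed.

Definition isprox x p := `|p - xb| <= rho /\
  forall q, `|q - xb| <= rho -> (phi p + (cost x p)%:E <= phi q + (cost x q)%:E)%E.

Lemma xb_in : `|xb - xb| <= rho.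
Proof. by rewrite subrr normr0 ltW. Qed.

Lemma prox_fin x p : isprox x p -> phi p = (fine (phi p))%:E.
Proof.
move=> [_ Hp]; have := Hp _ xb_in; rewrite hphi0.
by case E: (phi p) (hN p) => [r| |].
Qed.

Lemma prox_xb x p : isprox x p ->
  fine (phi p) + cost x p <= phi0 + cost x xb.
Proof.
move=> hp; have := (proj2 hp) _ xb_in; rewrite hphi0 (prox_fin hp).
by rewrite -!EFinD lee_fin.
Qed.

Lemma prox_lb x p : isprox x p ->
  phi0 + sigma / 2 * dotp (p - xb) (p - xb) <= fine (phi p).
Proof.
move=> hp; have := hmin (proj1 hp); rewrite (prox_fin hp) lee_fin //.
Qed.

Lemma cost_ge0 x q : 0 <= cost x q.
Proof. by rewrite /cost divr_ge0 ?dotp_ge0 // mulr_ge0 // ltW. Qed.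

Lemma prox_close x p : isprox x p ->
  sigma * lam * dotp (p - xb) (p - xb) <= dotp (x - xb) (x - xb) /\
  dotp (x - p) (x - p) <= dotp (x - xb) (x - xb).
Proof.
move=> hp; have h1 := prox_xb hp; have h2 := prox_lb hp.
have h3 := dotp_ge0 (p - xb).
have h4 := dotp_ge0 (x - p).
move: h1; rewrite /cost; set A := dotp (p - xb) _; set B := dotp (x - p) _.
set C := dotp (x - xb) _; move=> h1.
have hl2 : 0 < 2 * lam by rewrite mulr_gt0.
have e1 : forall y, y / (2 * lam) * (2 * lam) = y by move=> y; rewrite divfK // gt_eqF.
have h5 : B + sigma * lam * A <= C.
  have h : sigma / 2 * A + B / (2 * lam) <= C / (2 * lam).
    rewrite -(lerD2l phi0) addrA; apply: le_trans h1; rewrite lerD2r //.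
  have -> : C = B + sigma * lam * A + 2 * lam * (C / (2 * lam) - B / (2 * lam) - sigma / 2 * A).
    by field; rewrite gt_eqF.
  by rewrite lerDl mulr_ge0 ?(ltW hl2) // subr_ge0 lerBrDr.
have h6 : 0 <= sigma * lam * A by rewrite !mulr_ge0 // ltW.
split; apply: le_trans h5; [by rewrite lerDr | by rewrite lerDl].
Qed.

Lemma sqZB (k : R) (A B : 'rV[R]_n) :
  dotp (k *: A - B) (k *: A - B) = k ^+ 2 * dotp A A - 2 * k * dotp A B + dotp B B.
Proof. rewrite sqD !dotpZl !dotpZr dotpNr !dotpNl dotpNr opprK; ring. Qed.

Lemma prox_elb x p : isprox x p ->
  phi0 + sigma / (1 + lam * sigma) / 2 * dotp (x - xb) (x - xb) <= fine (phi p) + cost x p.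
Proof.
move=> hp; have h2 := prox_lb hp.
have -> : x - xb = (p - xb) + (x - p) by rewrite [RHS]addrC addrA subrK.
rewrite sqD /cost.
have hsq := dotp_ge0 (lam * sigma *: (p - xb) - (x - p)).
rewrite sqZB in hsq.
move: h2 hsq; set a := dotp (p - xb) _; set b := dotp (x - p) _; set d := dotp (p - xb) (x - p).
move=> h2 hsq.
have hk : 0 < 1 + lam * sigma by rewrite ltr_wpDr // ?mulr_ge0 // ltW.
suff key : sigma / (1 + lam * sigma) / 2 * (a + 2 * d + b) <= sigma / 2 * a + b / (2 * lam).
  apply: le_trans (_ : phi0 + (sigma / 2 * a + b / (2 * lam)) <= _).
    by rewrite lerD2l.
  by rewrite addrA lerD2r.
rewrite -subr_ge0.
have -> : sigma / 2 * a + b / (2 * lam) - sigma / (1 + lam * sigma) / 2 * (a + 2 * d + b)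
  = ((lam * sigma) ^+ 2 * a - 2 * (lam * sigma) * d + b) / (2 * lam * (1 + lam * sigma)).
  by field; rewrite !gt_eqF.
by rewrite divr_ge0 // !mulr_ge0 // ltW.
Qed.

Lemma cost_shift x h p :
  cost (x + h) p = cost x p + dotp (x - p) h / lam + dotp h h / (2 * lam).
Proof.
rewrite /cost.
have -> : x + h - p = (x - p) + h by rewrite addrAC.
by rewrite sqD; field; rewrite gt_eqF.
Qed.

Lemma prox_subdiff x p : isprox x p -> `|p - xb| < rho ->
  reg_subdiff phi p (lam^-1 *: (x - p)).
Proof.
move=> hp hpr; split; first by rewrite (prox_fin hp).
move=> eps he.
exists (Num.min (2 * lam * eps) (rho - `|p - xb|)).
  by rewrite lt_min subr_gt0 hpr andbT !mulr_gt0.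
move=> q; rewrite lt_min => /andP[hq1 hq2].
have hqr : `|q - xb| <= rho.
  have -> : q - xb = (q - p) + (p - xb) by rewrite addrA subrK.
  apply: le_trans (ler_normD _ _) _.
  rewrite -lerBrDr ltW //; apply: le_lt_trans hq2.
  have := norm_le_dotp (q - p); rewrite -enorm_sq ler_pXn2r ?nnegrE ?enorm_ge0 ?normr_ge0 //.
have := (proj2 hp) q hqr.
rewrite (prox_fin hp); case E: (phi q) (hN q) => [r| |] // _.
rewrite -!EFinD !lee_fin /cost.
have -> : x - q = (x - p) + - (q - p) by rewrite opprB addrA subrK.
rewrite (sqD (x - p) (- (q - p))) dotpNr dotpNl dotpNr opprK dotpZl.
rewrite -[dotp (q - p) (q - p)]enorm_sq.
set en := enorm (q - p) in hq1 *.
set B := dotp (x - p) (x - p); set D := dotp (x - p) (q - p).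
have hen : 0 <= en by apply: enorm_ge0.
have hl2 : 0 < 2 * lam by rewrite mulr_gt0.
have hq : en ^+ 2 / (2 * lam) <= eps * en.
  rewrite ler_pdivrMr // expr2 [eps * en]mulrC -mulrA ler_wpM2l //.
  by rewrite mulrC ltW.
have -> : (B + 2 * - D + en ^+ 2) / (2 * lam) = B / (2 * lam) - lam^-1 * D + en ^+ 2 / (2 * lam).
  by field; rewrite gt_eqF.
move=> h.
move: h hq; set t1 := lam^-1 * D; set t2 := en ^+ 2 / (2 * lam); set t3 := B / (2 * lam).
set t4 := eps * en; set f := fine (phi p) => h hq.
lra.
by move=> _; rewrite leey.
Qed.

Lemma sqZ (k : R) (A : 'rV[R]_n) : dotp (k *: A) (k *: A) = k ^+ 2 * dotp A A.
Proof. by rewrite dotpZl dotpZr mulrA expr2. Qed.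

Variables (w z : 'rV[R]_n).
Hypothesis Hnz : forall eps, 0 < eps -> exists2 d, 0 < d & forall x y,
  lim_subdiff phi x y ->
  Num.sqrt (dotp (x - xb) (x - xb) + dotp (y - 0) (y - 0)) < d ->
  dotp z (x - xb) + dotp (- w) (y - 0) <=
    eps * Num.sqrt (dotp (x - xb) (x - xb) + dotp (y - 0) (y - 0)).

Lemma main_lam :
  sigma / (1 + lam * sigma) * dotp (w + lam *: z) (w + lam *: z) <= dotp z w + lam * dotp z z.
Proof.
have /choice [pr Hpr] : forall x, exists p, isprox x p.
  by move=> x; have [p h1 h2] := prox_ex x; exists p.
set u := - (w + lam *: z).
have squ : dotp u u = dotp (w + lam *: z) (w + lam *: z) by rewrite dotpNl dotpNr opprK.
rewrite -squ.
have hk : 0 < 1 + lam * sigma by rewrite ltr_wpDr // ?mulr_ge0 // ltW.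
have hu0 : 0 <= dotp u u by apply: dotp_ge0.
set a := sigma / (1 + lam * sigma) * dotp u u.
set c := dotp u u / lam.
apply/ler_addgt0Pr => eps he.
pose Q := dotp u u * ((sigma * lam)^-1 + (lam ^+ 2)^-1).
have hQ : 0 <= Q by rewrite mulr_ge0 // addr_ge0 // invr_ge0 ?mulr_ge0 ?exprn_ge0 // ltW.
pose Kc := Num.sqrt Q.
have hKc : 0 <= Kc by apply: sqrtr_ge0.
have hK1 : 0 < Kc + 1 by rewrite ltr_wpDl.
pose en := eps / (2 * (Kc + 1)).
have hen : 0 < en by rewrite divr_gt0 // mulr_gt0.
have [d hd Hd] := Hnz hen.
pose T := Num.min (Num.min (d / (Kc + 1)) 1) (rho ^+ 2 * (sigma * lam) / (dotp u u + 1)).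
have hT : 0 < T.
  by rewrite !lt_min !divr_gt0 ?ltr01 ?mulr_gt0 ?exprn_gt0 // ltr_wpDl.
pose X t := xb + t *: u.
pose E t := fine (phi (pr (X t))) + cost (X t) (pr (X t)).
pose V t := dotp (X t - pr (X t)) u / lam.
have hXxb : forall t, X t - xb = t *: u by move=> t; rewrite /X addrAC subrr add0r.
have sqX : forall t, dotp (X t - xb) (X t - xb) = t ^+ 2 * dotp u u by move=> t; rewrite hXxb sqZ.
have H1 : forall t, 0 < t -> phi0 + a / 2 * t ^+ 2 <= E t.
  move=> t _; have := prox_elb (Hpr (X t)); rewrite sqX /E.
  by apply: le_trans; rewrite le_eqVlt; apply/orP; left; apply/eqP; rewrite /a; field; rewrite gt_eqF.
have H3 : forall s, 0 < s -> E s <= phi0 + c / 2 * s ^+ 2.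
  move=> s _; have := prox_xb (Hpr (X s)); rewrite /E /cost -/(cost _ _).
  move/le_trans; apply; rewrite /cost sqX /c le_eqVlt; apply/orP; left; apply/eqP.
  by field; rewrite gt_eqF.
have H2 : forall t s, 0 < t -> 0 < s -> E s <= E t + V t * (s - t) + c / 2 * (s - t) ^+ 2.
  move=> t s _ _.
  have hXs : X s = X t + (s - t) *: u.
    by rewrite /X -addrA -scalerDl [t + _]addrC subrK.
  have hs0 := (proj2 (Hpr (X s))) _ (proj1 (Hpr (X t))).
  move: hs0; rewrite (prox_fin (Hpr (X s))) (prox_fin (Hpr (X t))) -!EFinD lee_fin.
  rewrite [Y in cost Y (pr (X t))]hXs cost_shift dotpZr sqZ /E => hs1.
  apply: le_trans hs1 _; rewrite le_eqVlt; apply/orP; left; apply/eqP.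
  by rewrite /V /c; field; rewrite gt_eqF.
have he2 : 0 < eps / 2 by rewrite divr_gt0.
have [t [t0 tT] Ht] := chain he2 hT H1 H2 H3.
move: tT; rewrite !le_min => /andP[/andP[tT1 tT2] tT3].
have hc := prox_close (Hpr (X t)); rewrite sqX in hc; case: hc => hc1 hc2.
set p := pr (X t) in Ht hc1 hc2 *.
set v := lam^-1 *: (X t - p).
have hsl : 0 < sigma * lam by rewrite mulr_gt0.
have hpq : dotp (p - xb) (p - xb) < rho ^+ 2.
  rewrite -(ltr_pM2l hsl); apply: le_lt_trans hc1 _.
  apply: le_lt_trans (_ : t * dotp u u < _).
    by rewrite ler_wpM2r // expr2 ger_pMr // ltW.
  apply: le_lt_trans (_ : rho ^+ 2 * (sigma * lam) / (dotp u u + 1) * dotp u u < _).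
    by rewrite ler_wpM2r.
  have -> : sigma * lam * rho ^+ 2 = rho ^+ 2 * (sigma * lam) by rewrite mulrC.
  have hA : 0 < rho ^+ 2 * (sigma * lam) by rewrite mulr_gt0 ?exprn_gt0.
  rewrite mulrAC ltr_pdivrMr ?ltr_wpDl // ltr_pM2l // ltrDl //.
have hpr : `|p - xb| < rho.
  rewrite -(ltr_pXn2r (n := 2)) ?nnegrE ?normr_ge0 ?ltW //.
  exact: le_lt_trans (norm_le_dotp _) hpq.
have hlim : lim_subdiff phi p v.
  exists (fun=> p), (fun=> v); split => //; try exact: cvg_cst.
  by move=> k; exact: prox_subdiff (Hpr (X t)) hpr.
have hv : dotp (v - 0) (v - 0) = (lam^-1) ^+ 2 * dotp (X t - p) (X t - p) by rewrite subr0 sqZ.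
pose S := Num.sqrt (dotp (p - xb) (p - xb) + dotp (v - 0) (v - 0)).
have hS : S <= t * Kc.
  rewrite /S hv.
  have hsum : dotp (p - xb) (p - xb) + lam^-1 ^+ 2 * dotp (X t - p) (X t - p) <= t ^+ 2 * Q.
    rewrite /Q mulrA mulrDr; apply: lerD.
      by rewrite ler_pdivlMr // mulrC.
    by rewrite [leRHS]mulrC exprVn ler_wpM2l // invr_ge0 exprn_ge0 // ltW.
  apply: le_trans (ler_wsqrtr hsum) _.
  change (Num.sqrt (t ^+ 2 * Q) <= t * Kc).
  have e : t ^+ 2 * Q = (t * Kc) ^+ 2 by rewrite exprMn sqr_sqrtr.
  by rewrite e sqrtr_sqr ger0_norm // mulr_ge0 // ltW.
have hSd : S < d.
  apply: le_lt_trans hS _.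
  apply: le_lt_trans (_ : d / (Kc + 1) * Kc < _); first by rewrite ler_wpM2r.
  rewrite mulrAC ltr_pdivrMr // ltr_pM2l //; lra.
have hNz := Hd p v hlim hSd.
have hid : dotp z (p - xb) + dotp (- w) (v - 0) = t * dotp z u + V t.
  have -> : p - xb = (X t - xb) - (X t - p) by rewrite opprB [RHS]addrC addrA subrK.
  rewrite hXxb subr0 /V -/p /v /u dotpBr dotpZr dotpNl dotpZr.
  rewrite [dotp (X t - p) _]dotpNr [dotp (X t - p) _]dotpDr [dotp (X t - p) (lam *: z)]dotpZr (dotpC (X t - p) w) (dotpC (X t - p) z).
  by field; rewrite gt_eqF.
rewrite hid in hNz.
have hdzu : dotp z u = - (dotp z w + lam * dotp z z) by rewrite /u dotpNr dotpDr dotpZr.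
have hen2 : en * Kc <= eps / 2.
  rewrite /en mulrAC ler_pdivrMr ?mulr_gt0 //.
  have -> : eps / 2 * (2 * (Kc + 1)) = eps * (Kc + 1) by field.
  by rewrite ler_pM2l // lerDl.
have hmain : t * (a - eps / 2 + dotp z u - en * Kc) <= 0.
  have h1 : en * S <= en * (t * Kc) by rewrite ler_pM2l.
  have -> : t * (a - eps / 2 + dotp z u - en * Kc) = (a - eps / 2) * t + t * dotp z u - en * (t * Kc) by ring.
  move: h1 hNz Ht; set A1 := en * S; set A2 := en * (t * Kc); set A3 := (a - eps / 2) * t;
  set A4 := t * dotp z u; set A5 := V t => h1 hNz Ht; lra.
have : a - eps / 2 + dotp z u - en * Kc <= 0.
  by move: hmain; rewrite pmulr_rle0.
rewrite hdzu; lra.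
Qed.

End Prox.

Unset Implicit Arguments. Set Strict Implicit.

Theorem theorem6p3 (R : realType) (n : nat) (phi : 'rV[R]_n -> \bar R)
  (xb : 'rV[R]_n) (sigma : R) :
  (forall x, phi x != -oo%E) ->
  lim_subdiff phi xb 0 ->
  prox_regular phi xb 0 ->
  0 < sigma ->
  strong_local_min phi xb sigma ->
  (forall w z, breve_subdiff2 phi xb 0 w z -> sigma * enorm w ^+ 2 <= dotp z w) /\
  (forall w z, w != 0 -> breve_subdiff2 phi xb 0 w z -> 0 < dotp z w).
Proof.
move=> hN _ [hfin [[d1 hd1 Hlsc] _]] hs [_ [d0 hd0 Hsm]].
pose phi0 := fine (phi xb).
have hphi0 : phi xb = phi0%:E by rewrite fineK.
pose m := Num.min d0 d1.
have hm : 0 < m by rewrite lt_min hd0 hd1.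
have hn1 : 0 < n%:R + 1 :> R by rewrite ltr_wpDl ?ler0n.
have [rho [hr hrm]] : exists rho, 0 < rho /\ m = rho * (n%:R + 1).
  exists (m / (n%:R + 1)); split; first by rewrite divr_gt0.
  by rewrite divfK // gt_eqF.
have Hen : forall q, `|q - xb| <= rho -> enorm (q - xb) < m.
  move=> q hq.
  rewrite -(ltr_pXn2r (n := 2)) ?nnegrE ?enorm_ge0 ?ltW // enorm_sq.
  apply: le_lt_trans (dotp_le_n _) _.
  have hq2 : `|q - xb| ^+ 2 <= rho ^+ 2.
    have hq0 := normr_ge0 (q - xb); nra.
  apply: le_lt_trans (_ : n%:R * rho ^+ 2 < _).
    by rewrite ler_wpM2l ?ler0n.
  rewrite hrm exprMn [ltRHS]mulrC ltr_pM2r ?exprn_gt0 //.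
  have hn0 : 0 <= n%:R :> R by rewrite ler0n.
  nra.
have Hen0 : forall q, `|q - xb| <= rho -> enorm (q - xb) < d0 /\ enorm (q - xb) < d1.
  by move=> q hq; have := Hen q hq; rewrite lt_min => /andP[].
have hmin : forall q, `|q - xb| <= rho ->
    ((phi0 + sigma / 2 * dotp (q - xb) (q - xb))%:E <= phi q)%E.
  move=> q hq; have := Hsm q (proj1 (Hen0 q hq)).
  by rewrite hphi0 enorm_sq -EFinD.
have hlsc : forall q, `|q - xb| <= rho -> lsc_at phi q.
  by move=> q hq; apply: Hlsc; exact: (proj2 (Hen0 q hq)).
have part1 : forall w z, breve_subdiff2 phi xb 0 w z -> sigma * dotp w w <= dotp z w.
  move=> w z [_ Hnz].
  have Hl : forall lam, 0 < lam ->
      sigma / (1 + lam * sigma) * dotp (w + lam *: z) (w + lam *: z) <= dotp z w + lam * dotp z z.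
    by move=> lam hl; exact: (main_lam hphi0 hN hs hl hr hmin hlsc Hnz).
  set W := dotp w w; set c := dotp z w; set s := dotp z z.
  have Hl2 : forall lam, 0 < lam -> sigma * W - c <= lam * (s - sigma * c).
    move=> lam hl; have := Hl lam hl.
    rewrite sqD dotpZr sqZ (dotpC w z) -/W -/c -/s.
    have hk : 0 < 1 + lam * sigma by rewrite ltr_wpDr // ?mulr_ge0 // ltW.
    rewrite mulrAC ler_pdivrMr // => h.
    have hW0 : 0 <= lam * lam * sigma * s by rewrite !mulr_ge0 ?dotp_ge0 // ltW.
    nra.
  rewrite -subr_le0; apply/ler_addgt0Pr => e he; rewrite add0r.
  pose lam := e / (`|s - sigma * c| + 1).
  have hn2 : 0 < `|s - sigma * c| + 1 by rewrite ltr_wpDl.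
  have hl : 0 < lam by rewrite divr_gt0.
  apply: le_trans (Hl2 lam hl) _.
  apply: le_trans (_ : lam * `|s - sigma * c| <= _).
    by apply: ler_wpM2l; [exact: ltW | exact: ler_norm].
  rewrite /lam mulrAC ler_pdivrMr // ler_pM2l // lerDl //.
split => // [w z hwz|w z w0 hwz].
  by rewrite enorm_sq; exact: part1.
apply: lt_le_trans (part1 w z hwz).
rewrite mulr_gt0 //; apply: lt_le_trans (norm_le_dotp w).
by rewrite exprn_gt0 // normr_gt0.
Qed.
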